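(* Fix non-negative integers $t,a,b,c,u,e,f,g$ such that $t\ge 14$, $$10a+6b+3c+u+6e+3f+g\le\binom{t+2}{2},$$ and $(e,f,g)$ is one of the triples $(0,0,0),(0,0,1),(0,0,2),(0,1,0),(0,1,1),(0,1,2),(1,0,0),(1,0,1),(1,0,2),(1,1,0)$. Then $$6a+3b+c+10e+10f+10g\le\binom{t+1}{2}.$$ Moreover, if in addition $e+f+g\le 2$, the same conclusion holds for every $t\ge 12$; and if $e=f=g=0$, the conclusion holds for every $t\ge 3$. *)

(* Defs.v *)
From mathcomp Require Import all_boot.

Definition allowed_efg : seq (nat * nat * nat) :=
  [:: (0, 0, 0); (0, 0, 1); (0, 0, 2); (0, 1, 0); (0, 1, 1); (0, 1, 2);
      (1, 0, 0); (1, 0, 1); (1, 0, 2); (1, 1, 0)].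

(* Main.v *)
Require Import Defs.
From mathcomp Require Import all_boot.
From Stdlib Require Import Lia.

Lemma bin2_dbl n : 'C(n.+1, 2) * 2 = n.+1 * n.
Proof.
elim: n => [|n IH]; first by [].
rewrite binS bin1 mulnDl IH.
rewrite -!plusE -!multE; lia.
Qed.

Theorem lemma2p6 (t a b c u e f g : nat) :
  (e, f, g) \in allowed_efg ->
  10 * a + 6 * b + 3 * c + u + 6 * e + 3 * f + g <= 'C(t.+2, 2) ->
  ((14 <= t -> 6 * a + 3 * b + c + 10 * e + 10 * f + 10 * g <= 'C(t.+1, 2))
   /\ (e + f + g <= 2 -> 12 <= t ->
       6 * a + 3 * b + c + 10 * e + 10 * f + 10 * g <= 'C(t.+1, 2))
   /\ (e = 0 -> f = 0 -> g = 0 -> 3 <= t ->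
       6 * a + 3 * b + c + 10 * e + 10 * f + 10 * g <= 'C(t.+1, 2))).
Proof.
move=> Hm H.
have HX := bin2_dbl t.
rewrite binS bin1 in H.
move: H HX; set X := 'C(t.+1, 2) => H HX.
rewrite mulSn in HX.
move: H; rewrite /allowed_efg !inE in Hm.
repeat (case/orP: Hm => [/eqP[-> -> ->]|Hm]); last move/eqP: Hm => [-> -> ->].
all: move/leP=> H.
all: split; [|split]; intros;
  repeat match goal with
  | h : is_true (?k <= ?tt) |- _ => is_var tt; have := leq_mul h (leqnn tt); move: h;
       let h1 := fresh in let h2 := fresh in move=> /leP h1 /leP h2; rewrite -?multE in h2
  | h : is_true (_ <= _) |- _ => move/leP: h => h; rewrite -?plusE -?multE in h end;
  apply/leP; rewrite -?plusE -?multE in H HX *.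
all: lia.

Qed.
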